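(* Let $K$ be an idempotent ordered TGP-$\omega$-valuation monoid, $AP$ a finite set of atomic propositions, $k\in K\setminus\{\mathbf{0},\mathbf{1}\}$ and $\varphi\in k\text{-}stLTL(K,AP)$. Then $\|\varphi\|$ is $k$-safe.
   Context: Idempotent ordered TGP-$\omega$-valuation monoid $(K,+,\cdot,Val^{\omega},\mathbf{0},\mathbf{1})$: complete (infinitary sums over arbitrary index sets with the usual axioms), idempotent monoid $(K,+,\mathbf{0})$, totally ordered by the natural order $k\le k'$ iff $k'=k'+k$, with $Val^{\omega}$ from finitely-valued sequences in $K$ to $K$ and a product $\cdot$ with zero $\mathbf{0}$ and unit $\mathbf{1}$, such that $Val^{\omega}=\mathbf{0}$ if some entry is $\mathbf{0}$, $Val^{\omega}(\mathbf{1}^{\omega})=\mathbf{1}$, $\sum_I(k\cdot\mathbf{1})=k\cdot\sum_I\mathbf{1}$, $Val^{\omega}$ distributes over finite sums of families lying entirely in $L\setminus\{\mathbf{0},\mathbf{1}\}$ or entirely in $\{\mathbf{0},\mathbf{1}\}$ ($L\subseteq K$ finite), and $Val^{\omega}(\mathbf{1},k_1,\dots)=Val^{\omega}(k_1,\dots)$, $Val^{\omega}(k,\mathbf{1},\dots)=k$, $k\le\mathbf{1}$, $k_i\ge k\ \forall i\Rightarrow Val^{\omega}((k_i)_i)\ge k$. Weighted LTL over $AP$ and $K$: $\varphi::=k\mid a\mid\neg a\mid\varphi\vee\varphi\mid\varphi\wedge\varphi\mid\bigcirc\varphi\mid\varphi U\varphi\mid\square\varphi$, with semantics $\|\varphi\|:(\mathcal{P}(AP))^{\omega}\to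 K$: $(\|k\|,w)=k$; $(\|a\|,w)=\mathbf{1}$ if $a\in w(0)$ else $\mathbf{0}$; $\neg a$ dually; $\vee\mapsto+$, $\wedge\mapsto\cdot$ pointwise; $(\|\bigcirc\varphi\|,w)=(\|\varphi\|,w_{\ge1})$; $(\|\varphi U\psi\|,w)=\sum_{i\ge0}Val^{\omega}((\|\varphi\|,w_{\ge0}),\dots,(\|\varphi\|,w_{\ge i-1}),(\|\psi\|,w_{\ge i}),\mathbf{1},\mathbf{1},\dots)$; $(\|\square\varphi\|,w)=Val^{\omega}(((\|\varphi\|,w_{\ge i}))_{i\ge0})$. $true:=\mathbf{1}$, $\varphi\tilde U\psi:=\square\varphi\vee(\varphi U\psi)$. $sbLTL(K,AP)$: $\varphi::=true\mid a\mid\neg a\mid\varphi\vee\varphi\mid\varphi\wedge\varphi\mid\bigcirc\varphi\mid\varphi\tilde U\varphi\mid\square\varphi$. $L_k=\{k'\in K\mid k'\ge k\}$. $k\text{-}stLTL(K,AP)$ consists of formulas $\bigvee_{1\le i\le n}(k_i\wedge\varphi_i)$ with $k_i\in L_k\setminus\{\mathbf{0},\mathbf{1}\}$, $\varphi_i\in sbLTL(K,AP)$. For $k\in K\setminus\{\mathbf{0},\mathbf{1}\}$, a series $s:(\mathcal{P}(AP))^{\omega}\to K$ is $k$-safe if for every $w$: whenever for every $i>0$ there is $u$ with $(s,w_{<i}u)\ge k$ ($w_{<i}$ the length-$i$ prefix), then $(s,w)\ge k$. *)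

(* Defs.v *)
From Stdlib Require Import List Arith.
Import ListNotations.

Definition fin_valued {K : Type} (s : nat -> K) : Prop :=
  exists l : list K, forall i, In (s i) l.

Definition finite_type (T : Type) : Prop := exists l : list T, forall x, In x l.

Record TGPValMonoid (K : Type) := {
  plus : K -> K -> K;
  zero : K;
  one  : K;
  mul  : K -> K -> K;
  Val  : (nat -> K) -> K;        (* only constrained on finitely-valued sequences *)
  Sum  : forall I : Type, (I -> K) -> K;

  plus_assoc : forall a b c, plus a (plus b c) = plus (plus a b) c;
  plus_comm  : forall a b, plus a b = plus b a;
  plus_zero_l : forall a, plus zero a = a;
  plus_idem  : forall a, plus a a = a;

  sum_empty : forall (I : Type) (f : I -> K), (I -> False) -> Sum I f = zero;
  sum_single : forall (I : Type) (i0 : I) (f : I -> K),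
      (forall i, i = i0) -> Sum I f = f i0;
  sum_pair : forall f : bool -> K, Sum bool f = plus (f true) (f false);
  sum_partition : forall (J : Type) (I : J -> Type) (f : forall j, I j -> K),
      Sum {j : J & I j} (fun p => f (projT1 p) (projT2 p))
      = Sum J (fun j => Sum (I j) (f j));
  sum_bij : forall (I I' : Type) (g : I' -> I) (h : I -> I') (f : I -> K),
      (forall x, g (h x) = x) -> (forall y, h (g y) = y) ->
      Sum I' (fun y => f (g y)) = Sum I f;

  (* totality of the natural order  k <= k'  iff  k' = k' + k *)
  le_total : forall a b, b = plus b a \/ a = plus a b;

  mul_zero_l : forall a, mul zero a = zero;
  mul_zero_r : forall a, mul a zero = zero;
  mul_one_l : forall a, mul one a = a;
  mul_one_r : forall a, mul a one = a;

  val_zero : forall s, fin_valued s -> (exists i, s i = zero) -> Val s = zero;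
  val_ones : Val (fun _ => one) = one;
  sum_scal : forall (I : Type) (k : K),
      Sum I (fun _ => mul k one) = mul k (Sum I (fun _ => one));
  val_distr : forall (L : list K) (I : nat -> Type) (c : forall j, I j -> K),
      (forall j, finite_type (I j)) ->
      ((forall j x, In (c j x) L /\ c j x <> zero /\ c j x <> one) \/
       (forall j x, c j x = zero \/ c j x = one)) ->
      Val (fun j => Sum (I j) (c j))
      = Sum (forall j, I j) (fun f => Val (fun j => c j (f j)));
  val_shift : forall s, fin_valued s ->
      Val (fun n => match n with 0 => one | S m => s m end) = Val s;
  val_head : forall k, Val (fun n => match n with 0 => k | S _ => one end) = k;
  le_one : forall k, one = plus one k;
  val_lb : forall (k : K) (s : nat -> K), fin_valued s ->
      (forall i, s i = plus (s i) k) -> Val s = plus (Val s) k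
}.

Arguments plus {K} _ _ _.
Arguments zero {K} _.
Arguments one {K} _.
Arguments mul {K} _ _ _.
Arguments Val {K} _ _.
Arguments Sum {K} _ _ _.

Definition kle {K} (M : TGPValMonoid K) (a b : K) : Prop := b = plus M b a.

(* Words over P(AP): a letter is a subset of AP given by its characteristic function. *)
Definition word (AP : Type) := nat -> (AP -> bool).
Definition suffix {AP} (w : word AP) (i : nat) : word AP := fun n => w (n + i).

Inductive formula (K AP : Type) : Type :=
| FConst : K -> formula K AP
| FAtom : AP -> formula K AP
| FNAtom : AP -> formula K AP
| FOr : formula K AP -> formula K AP -> formula K AP
| FAnd : formula K AP -> formula K AP -> formula K AP
| FNext : formula K AP -> formula K AP
| FUntil : formula K AP -> formula K AP -> formula K AP
| FBox : formula K AP -> formula K AP.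

Arguments FConst {K AP} _.
Arguments FAtom {K AP} _.
Arguments FNAtom {K AP} _.
Arguments FOr {K AP} _ _.
Arguments FAnd {K AP} _ _.
Arguments FNext {K AP} _.
Arguments FUntil {K AP} _ _.
Arguments FBox {K AP} _.

Fixpoint sem {K AP} (M : TGPValMonoid K) (phi : formula K AP) (w : word AP) : K :=
  match phi with
  | FConst k => k
  | FAtom a => if w 0 a then one M else zero M
  | FNAtom a => if w 0 a then zero M else one M
  | FOr p q => plus M (sem M p w) (sem M q w)
  | FAnd p q => mul M (sem M p w) (sem M q w)
  | FNext p => sem M p (suffix w 1)
  | FUntil p q =>
      Sum M nat (fun i =>
        Val M (fun j => if j <? i then sem M p (suffix w j)
                        else if j =? i then sem M q (suffix w i)
                        else one M))
  | FBox p => Val M (fun i => sem M p (suffix w i))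
  end.

Definition FTrue {K AP} (M : TGPValMonoid K) : formula K AP := FConst (one M).
Definition FRelU {K AP} (p q : formula K AP) : formula K AP := FOr (FBox p) (FUntil p q).

Inductive sbLTL {K AP} (M : TGPValMonoid K) : formula K AP -> Prop :=
| sb_true : sbLTL M (FTrue M)
| sb_atom : forall a, sbLTL M (FAtom a)
| sb_natom : forall a, sbLTL M (FNAtom a)
| sb_or : forall p q, sbLTL M p -> sbLTL M q -> sbLTL M (FOr p q)
| sb_and : forall p q, sbLTL M p -> sbLTL M q -> sbLTL M (FAnd p q)
| sb_next : forall p, sbLTL M p -> sbLTL M (FNext p)
| sb_relU : forall p q, sbLTL M p -> sbLTL M q -> sbLTL M (FRelU p q)
| sb_box : forall p, sbLTL M p -> sbLTL M (FBox p).

Fixpoint bigOr {K AP} (d : K * formula K AP) (l : list (K * formula K AP)) : formula K AP :=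
  match l with
  | [] => FAnd (FConst (fst d)) (snd d)
  | d' :: l' => FOr (FAnd (FConst (fst d)) (snd d)) (bigOr d' l')
  end.

Definition kstLTL {K AP} (M : TGPValMonoid K) (k : K) (phi : formula K AP) : Prop :=
  exists (d : K * formula K AP) (l : list (K * formula K AP)),
    phi = bigOr d l /\
    forall p, In p (d :: l) ->
      kle M k (fst p) /\ fst p <> zero M /\ fst p <> one M /\ sbLTL M (snd p).

Definition prefix_concat {AP} (w : word AP) (i : nat) (u : word AP) : word AP :=
  fun n => if n <? i then w n else u (n - i).

Definition k_safe {K AP} (M : TGPValMonoid K) (k : K) (s : word AP -> K) : Prop :=
  forall w : word AP,
    (forall i, 0 < i -> exists u : word AP, kle M k (s (prefix_concat w i u))) ->
    kle M k (s w).

(* Main.v *)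
Require Import Defs.
From Stdlib Require Import List Arith Lia Classical FunctionalExtensionality ProofIrrelevance.
Import ListNotations.

Definition agree {AP} (v w : word AP) (i : nat) := forall n, n < i -> v n = w n.
Definition closed {AP} (L : word AP -> Prop) :=
  forall w, (forall i, exists v, L v /\ agree v w i) -> L w.

Lemma closed_ext {AP} (A B : word AP -> Prop) :
  (forall w, A w <-> B w) -> closed A -> closed B.
Proof.
  intros E HA w H. apply E, HA. intros i; destruct (H i) as [v [Hv Ha]].
  exists v; split; [apply E|]; auto.
Qed.

Lemma closed_union {AP} (A B : word AP -> Prop) :
  closed A -> closed B -> closed (fun w => A w \/ B w).
Proof.
  intros HA HB w H.
  destruct (classic (forall i, exists v, A v /\ agree v w i)) as [H1|H1].
  - left; apply HA, H1.
  - right. apply not_all_ex_not in H1. destruct H1 as [i0 Hi0]. apply HB. intros i.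
    destruct (H (max i i0)) as [v [[Hv|Hv] Ha]].
    + exfalso; apply Hi0; exists v; split; auto; intros n Hn; apply Ha; lia.
    + exists v; split; auto; intros n Hn; apply Ha; lia.
Qed.

Lemma closed_forall {AP} {X : Type} (L : X -> word AP -> Prop) :
  (forall x, closed (L x)) -> closed (fun w => forall x, L x w).
Proof.
  intros HL w H x. apply HL. intros i. destruct (H i) as [v [Hv Ha]]. exists v; auto.
Qed.

Lemma closed_and {AP} (A B : word AP -> Prop) :
  closed A -> closed B -> closed (fun w => A w /\ B w).
Proof.
  intros HA HB w H; split; [apply HA|apply HB]; intros i;
  destruct (H i) as [v [[H1 H2] Ha]]; exists v; auto.
Qed.

Lemma closed_imp {AP} (Q : Prop) (L : word AP -> Prop) :
  (Q -> closed L) -> closed (fun w => Q -> L w).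
Proof.
  intros HL w H q. apply (HL q). intros i. destruct (H i) as [v [Hv Ha]]. exists v; auto.
Qed.

Lemma closed_shift {AP} (L : word AP -> Prop) n :
  closed L -> closed (fun w => L (suffix w n)).
Proof.
  intros HL w H. apply HL. intros i. destruct (H (i + n)) as [v [Hv Ha]].
  exists (suffix v n). split; auto. intros m Hm. unfold suffix. apply Ha. lia.
Qed.

Lemma closed_exb {AP} (X : nat -> word AP -> Prop) :
  (forall m, closed (X m)) -> forall n, closed (fun w => exists m, m <= n /\ X m w).
Proof.
  intros HX n; induction n.
  - eapply closed_ext; [|apply (HX 0)]. intros w; split.
    + intros H; exists 0; split; auto.
    + intros [m [Hm H]]; replace m with 0 in H by lia; exact H.
  - eapply closed_ext; [|apply (closed_union _ _ IHn (HX (S n)))]. intros w; split.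
    + intros [[m [Hm H]]|H]; [exists m; split; [lia|auto] | exists (S n); auto].
    + intros [m [Hm H]]. destruct (Nat.eq_dec m (S n)) as [->|Hne];
        [right; auto | left; exists m; split; [lia|auto]].
Qed.

Lemma closed_list {AP} {T} (S : T -> word AP -> Prop) (l : list T) :
  (forall p, In p l -> closed (S p)) -> closed (fun w => exists p, In p l /\ S p w).
Proof.
  induction l as [|a l IH]; intros H.
  - intros w Hw. destruct (Hw 0) as [v [[p [[] _]] _]].
  - eapply closed_ext;
      [|apply (closed_union _ _ (H a (or_introl eq_refl)) (IH (fun p Hp => H p (or_intror Hp))))].
    intros w; split.
    + intros [Ha|[p [Hp Hs]]]; [exists a; simpl; auto | exists p; simpl; auto].
    + intros [p [[<-|Hp] Hs]]; [left; auto | right; exists p; auto].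
Qed.

Definition b01 {K} (M : TGPValMonoid K) (x : K) := x = zero M \/ x = one M.

Lemma val01 {K} (M : TGPValMonoid K) (s : nat -> K) :
  zero M <> one M -> (forall j, b01 M (s j)) ->
  b01 M (Val M s) /\ (Val M s = one M <-> forall j, s j = one M).
Proof.
  intros Hzo H. destruct (classic (exists j, s j = zero M)) as [Hz|Hz].
  - assert (E : Val M s = zero M).
    { apply val_zero; auto. exists [zero M; one M]. intros i.
      destruct (H i) as [-> | ->]; simpl; auto. }
    rewrite E. split; [left; auto|]. split; intros E'; [congruence|].
    destruct Hz as [j Hj]; rewrite E' in Hj; congruence.
  - assert (A : forall j, s j = one M).
    { intros j; destruct (H j); auto; exfalso; apply Hz; eauto. }
    assert (E : Val M s = one M).
    { replace s with (fun _ : nat => one M) by (extensionality j; symmetry; auto).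
      apply val_ones. }
    rewrite E. split; [right; auto|]. split; auto.
Qed.

Lemma sum_zero {K} (M : TGPValMonoid K) (I : Type) : Sum M I (fun _ => zero M) = zero M.
Proof.
  pose proof (sum_partition K M I (fun _ => False) (fun j (x : False) => match x return K with end)) as E.
  cbn beta in E.
  rewrite (sum_empty K M {j : I & False}) in E by (intros [j []]).
  transitivity (Sum M I (fun j => Sum M False (fun x : False => match x return K with end))).
  { f_equal. extensionality j. symmetry. apply sum_empty. intros []. }
  rewrite <- E. reflexivity.
Qed.

Definition Pf (i0 : nat) (b : bool) : Type := if b then unit else {n : nat | n <> i0}.
Definition gf i0 (p : sigT (Pf i0)) : nat :=
  match p with existT _ b x =>
    (match b return Pf i0 b -> nat with true => fun _ => i0 | false => fun x => proj1_sig x end) x end.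
Definition hf i0 (n : nat) : sigT (Pf i0) :=
  match Nat.eq_dec n i0 with
  | left _ => existT (Pf i0) true tt
  | right H => existT (Pf i0) false (exist _ n H) end.

Lemma gh i0 : forall n, gf i0 (hf i0 n) = n.
Proof. intros n; unfold hf; destruct (Nat.eq_dec n i0); simpl; auto. Qed.

Lemma hg i0 : forall p, hf i0 (gf i0 p) = p.
Proof.
  intros [[|] x]; simpl.
  - simpl in x. destruct x. unfold hf; destruct (Nat.eq_dec i0 i0); [reflexivity|contradiction].
  - simpl in x. destruct x as [n Hn]; simpl; unfold hf; destruct (Nat.eq_dec n i0);
      [contradiction| f_equal; f_equal; apply proof_irrelevance].
Qed.

Lemma sum_one_nat {K} (M : TGPValMonoid K) (f : nat -> K) i0 :
  f i0 = one M -> Sum M nat f = one M.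
Proof.
  intros Hf.
  rewrite <- (sum_bij K M nat _ (gf i0) (hf i0) f (gh i0) (hg i0)).
  pose proof (sum_partition K M bool (Pf i0) (fun b x => f (gf i0 (existT _ b x)))) as E2.
  replace (Sum M (sigT (Pf i0)) (fun y => f (gf i0 y))) with
    (Sum M bool (fun j => Sum M (Pf i0 j) (fun x => f (gf i0 (existT _ j x))))).
  2:{ rewrite <- E2. f_equal. extensionality p. destruct p. reflexivity. }
  rewrite sum_pair.
  rewrite (sum_single K M (Pf i0 true) tt) by (intros u; simpl in u; destruct u; reflexivity).
  simpl. rewrite Hf. symmetry; apply le_one.
Qed.

Lemma sum01 {K} (M : TGPValMonoid K) (f : nat -> K) :
  zero M <> one M -> (forall i, b01 M (f i)) ->
  b01 M (Sum M nat f) /\ (Sum M nat f = one M <-> exists i, f i = one M).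
Proof.
  intros Hzo H. destruct (classic (exists i, f i = one M)) as [[i Hi]|Hn].
  - rewrite (sum_one_nat M f i Hi). split; [right; auto|]. split; eauto.
  - replace f with (fun _ : nat => zero M).
    + rewrite sum_zero. split; [left; auto|]. split; intros E; [congruence|].
      destruct E as [i Hi]; congruence.
    + extensionality i. destruct (H i); auto. exfalso; apply Hn; eauto.
Qed.

Lemma plus01 {K} (M : TGPValMonoid K) a b :
  zero M <> one M -> b01 M a -> b01 M b ->
  b01 M (plus M a b) /\ (plus M a b = one M <-> a = one M \/ b = one M).
Proof.
  intros Hzo [-> | ->] [-> | ->].
  - rewrite plus_zero_l. split; [left; auto|]. split; [congruence|intros [E|E]; congruence].
  - rewrite plus_zero_l. split; [right; auto|]. tauto.
  - rewrite plus_comm, plus_zero_l. split; [right; auto|]. tauto.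
  - rewrite plus_idem. split; [right; auto|]. tauto.
Qed.

Lemma mul01 {K} (M : TGPValMonoid K) a b :
  zero M <> one M -> b01 M a -> b01 M b ->
  b01 M (mul M a b) /\ (mul M a b = one M <-> a = one M /\ b = one M).
Proof.
  intros Hzo [-> | ->] Hb.
  - rewrite mul_zero_l. split; [left; auto|]. split; [congruence|intros [E _]; congruence].
  - rewrite mul_one_l. split; auto. tauto.
Qed.

Lemma sb_props {K AP} (M : TGPValMonoid K) (phi : formula K AP) :
  zero M <> one M -> sbLTL M phi ->
  (forall w, b01 M (sem M phi w)) /\ closed (fun w => sem M phi w = one M).
Proof.
  intros Hzo H; induction H as [ | a | a | p q Hp [Bp Cp] Hq [Bq Cq]
     | p q Hp [Bp Cp] Hq [Bq Cq] | p Hp [Bp Cp] | p q Hp [Bp Cp] Hq [Bq Cq] | p Hp [Bp Cp]].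
  - unfold FTrue; simpl. split; [intros; right; reflexivity | intros w _; reflexivity].
  - simpl. split.
    + intros w; destruct (w 0 a); [right|left]; auto.
    + intros w H. destruct (H 1) as [v [Hv Ha]]. rewrite (Ha 0) in Hv by lia. exact Hv.
  - simpl. split.
    + intros w; destruct (w 0 a); [left|right]; auto.
    + intros w H. destruct (H 1) as [v [Hv Ha]]. rewrite (Ha 0) in Hv by lia. exact Hv.
  - simpl. split.
    + intros w; apply (plus01 M _ _ Hzo (Bp w) (Bq w)).
    + eapply closed_ext; [|apply (closed_union _ _ Cp Cq)].
      intros w; symmetry; apply (plus01 M _ _ Hzo (Bp w) (Bq w)).
  - simpl. split.
    + intros w; apply (mul01 M _ _ Hzo (Bp w) (Bq w)).
    + eapply closed_ext; [|apply (closed_and _ _ Cp Cq)].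
      intros w; symmetry; apply (mul01 M _ _ Hzo (Bp w) (Bq w)).
  - simpl. split.
    + intros w; apply Bp.
    + apply (closed_shift (fun v => sem M p v = one M) 1 Cp).
  -
    assert (HU : forall w, b01 M (sem M (FUntil p q) w) /\
        (sem M (FUntil p q) w = one M <-> exists i, (forall j, j < i -> sem M p (suffix w j) = one M)
            /\ sem M q (suffix w i) = one M)).
    { intros w. simpl.
      assert (Hg : forall i, b01 M (Val M (fun j => if j <? i then sem M p (suffix w j)
                        else if j =? i then sem M q (suffix w i) else one M)) /\
          (Val M (fun j => if j <? i then sem M p (suffix w j)
                        else if j =? i then sem M q (suffix w i) else one M) = one M <->
          (forall j, j < i -> sem M p (suffix w j) = one M) /\ sem M q (suffix w i) = one M)).
      { intros i. destruct (val01 M (fun j => if j <? i then sem M p (suffix w j)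
                        else if j =? i then sem M q (suffix w i) else one M) Hzo) as [B E].
        { intros j. destruct (j <? i); [apply Bp|destruct (j =? i); [apply Bq|right; auto]]. }
        split; auto. rewrite E. split.
        - intros A. split.
          + intros j Hj. specialize (A j). simpl in A.
            replace (j <? i) with true in A by (symmetry; apply Nat.ltb_lt; lia). exact A.
          + specialize (A i). simpl in A. rewrite Nat.ltb_irrefl, Nat.eqb_refl in A. exact A.
        - intros [A1 A2] j. simpl. destruct (lt_eq_lt_dec j i) as [[Hlt|Heq]|Hgt].
          + replace (j <? i) with true by (symmetry; apply Nat.ltb_lt; lia). auto.
          + subst j. rewrite Nat.ltb_irrefl, Nat.eqb_refl. auto.
          + replace (j <? i) with false by (symmetry; apply Nat.ltb_ge; lia).
            replace (j =? i) with false by (symmetry; apply Nat.eqb_neq; lia). auto. }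
      destruct (sum01 M _ Hzo (fun i => proj1 (Hg i))) as [B E].
      split; auto. rewrite E. split; intros [i Hi]; exists i; apply (Hg i); auto. }
    assert (HB : forall w, b01 M (sem M (FBox p) w) /\
        (sem M (FBox p) w = one M <-> forall n, sem M p (suffix w n) = one M)).
    { intros w. simpl. apply val01; auto. }
    assert (HR : forall w, b01 M (sem M (FRelU p q) w) /\
        (sem M (FRelU p q) w = one M <-> (forall n, sem M p (suffix w n) = one M) \/
          exists i, (forall j, j < i -> sem M p (suffix w j) = one M)
            /\ sem M q (suffix w i) = one M)).
    { intros w. unfold FRelU. simpl sem at 1.
      destruct (plus01 M _ _ Hzo (proj1 (HB w)) (proj1 (HU w))) as [B E].
      split; auto. rewrite E, (proj2 (HB w)), (proj2 (HU w)). tauto. }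
    split; [intros w; apply HR|].
    eapply closed_ext with (A := fun w => forall n,
      (forall j, j <= n -> sem M p (suffix w j) = one M) \/
      (exists m, m <= n /\ (sem M q (suffix w m) = one M /\
          forall j, j < m -> sem M p (suffix w j) = one M))).
    + intros w. rewrite (proj2 (HR w)). split.
      * intros A. destruct (classic (forall n, sem M p (suffix w n) = one M)) as [Y|Y]; [left; auto|].
        right. apply not_all_ex_not in Y. destruct Y as [n0 Hn0].
        destruct (A n0) as [A1|[m [Hm [A2 A3]]]].
        -- exfalso; apply Hn0, A1; lia.
        -- exists m; auto.
      * intros [A|[i [A1 A2]]] n.
        -- left; auto.
        -- destruct (le_lt_dec i n) as [Hin|Hni].
           ++ right; exists i; auto.
           ++ left; intros j Hj; apply A1; lia.
    + apply closed_forall. intros n. apply closed_union.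
      * apply closed_forall. intros j. apply closed_imp. intros _.
        apply (closed_shift (fun v => sem M p v = one M) j Cp).
      * apply (closed_exb (fun m w => sem M q (suffix w m) = one M /\
          forall j, j < m -> sem M p (suffix w j) = one M)).
        intros m. apply closed_and.
        -- apply (closed_shift (fun v => sem M q v = one M) m Cq).
        -- apply closed_forall. intros j. apply closed_imp. intros _.
           apply (closed_shift (fun v => sem M p v = one M) j Cp).
  - simpl. split.
    + intros w. apply val01; auto.
    + eapply closed_ext with (A := fun w => forall n, sem M p (suffix w n) = one M).
      * intros w. symmetry. apply val01; auto.
      * apply closed_forall. intros n. apply (closed_shift (fun v => sem M p v = one M) n Cp).
Qed.

Definition kle' {K} := @kle K.

Lemma kle_plus {K} (M : TGPValMonoid K) k a b :
  kle M k (plus M a b) <-> kle M k a \/ kle M k b.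
Proof.
  unfold kle. split.
  - intros H. destruct (le_total K M a b) as [E|E].
    + right. rewrite (plus_comm K M a b), <- E in H. exact H.
    + left. rewrite <- E in H. exact H.
  - intros [Ha|Hb].
    + rewrite <- plus_assoc, (plus_comm K M b k), plus_assoc, <- Ha. reflexivity.
    + rewrite <- plus_assoc, <- Hb. reflexivity.
Qed.

Lemma kle_mul {K} (M : TGPValMonoid K) k c s :
  k <> zero M -> zero M <> one M -> kle M k c -> b01 M s ->
  (kle M k (mul M c s) <-> s = one M).
Proof.
  intros hk0 Hzo Hc [-> | ->].
  - rewrite mul_zero_r. unfold kle. rewrite plus_zero_l. split; intros E; [|congruence].
    exfalso; apply hk0; auto.
  - rewrite mul_one_r. tauto.
Qed.

Lemma bigOr_iff {K AP} (M : TGPValMonoid K) k (hk0 : k <> zero M) (Hzo : zero M <> one M) :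
  forall (l : list (K * formula K AP)) d,
  (forall p, In p (d :: l) -> kle M k (fst p) /\ fst p <> zero M /\ fst p <> one M /\ sbLTL M (snd p)) ->
  forall w, kle M k (sem M (bigOr d l) w) <-> exists p, In p (d :: l) /\ sem M (snd p) w = one M.
Proof.
  induction l as [|d' l IH]; intros d Hall w.
  - simpl. destruct (Hall d (or_introl eq_refl)) as [H1 [_ [_ H4]]].
    rewrite (kle_mul M k _ _ hk0 Hzo H1 (proj1 (sb_props M _ Hzo H4) w)).
    split; [intros E; exists d; auto | intros [p [[<-|[]] E]]; auto].
  - simpl bigOr. simpl sem. rewrite kle_plus.
    destruct (Hall d (or_introl eq_refl)) as [H1 [_ [_ H4]]].
    rewrite (kle_mul M k _ _ hk0 Hzo H1 (proj1 (sb_props M _ Hzo H4) w)).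
    rewrite (IH d' (fun p Hp => Hall p (or_intror Hp)) w).
    split.
    + intros [E|[p [Hp E]]]; [exists d; simpl; auto | exists p; simpl; auto].
    + intros [p [[<-|Hp] E]]; [left; auto | right; exists p; auto].
Qed.

Theorem lemma8 (K : Type) (M : TGPValMonoid K) (AP : Type) (HAP : finite_type AP)
  (k : K) (hk0 : k <> zero M) (hk1 : k <> one M) (phi : formula K AP) :
  kstLTL M k phi -> k_safe M k (sem M phi).
Proof.
  intros [d [l [-> Hall]]] w Hw.
  assert (Hzo : zero M <> one M).
  { intros E. apply hk0. rewrite <- (mul_one_r K M k), <- E, mul_zero_r. reflexivity. }
  apply (bigOr_iff M k hk0 Hzo l d Hall w).
  apply (closed_list (fun p w => sem M (snd p) w = one M) (d :: l)).
  - intros p Hp. destruct (Hall p Hp) as [_ [_ [_ H4]]]. apply (sb_props M _ Hzo H4).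
  - intros i. destruct (Hw (S i) ltac:(lia)) as [u Hu].
    exists (prefix_concat w (S i) u). split.
    + apply (bigOr_iff M k hk0 Hzo l d Hall). exact Hu.
    + intros n Hn. unfold prefix_concat.
      replace (n <? S i) with true by (symmetry; apply Nat.ltb_lt; lia). reflexivity.
Qed.
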